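(* Assume Assumption (I), and let $(L_k,u_k)$ be a sequence generated by Algorithm A (with $(\epsilon_k)$ monotonically decreasing). Then for all $k$, \[ \Phi_{\epsilon_{k+1}}(u_{k+1})+\frac\alpha2\|u_{k+1}-u_k\|_V^2+\beta\int_\Omega\psi_{\epsilon_k}'(u_k^2)(u_{k+1}-u_k)^2\,dx\le\Phi_{\epsilon_k}(u_k). \]
   Context: Standing assumptions: $\Omega\subset\mathbb R^d$ bounded Lipschitz domain; $V$ real Hilbert space with inner product $\langle\cdot,\cdot\rangle_V$, $V\subset L^2(\Omega)$ with compact and dense embedding; $V^*$ dual. $F:V\to\mathbb R$ weakly lower semicontinuous, bounded below by an affine function, continuously Fréchet differentiable. $\alpha>0$, $\beta>0$, $p\in(0,1)$. Assumption (I): the standing assumptions hold; $F'$ is completely continuous ($u_n\rightharpoonup u$ in $V$ implies $F'(u_n)\to F'(u)$ in $V^*$); and $F':V\to V^*$ is Lipschitz continuous on bounded sets. For $\epsilon>0$, $\psi_\epsilon(t)=\frac p2\frac{t}{\epsilon^{2-p}}+(1-\frac p2)\epsilon^p$ if $t\in[0,\epsilon^2)$, $\psi_\epsilon(t)=t^{p/2}$ if $t\ge\epsilon^2$, $\psi_\epsilon'(t)=\frac p2\min(\epsilon^{p-2},t^{(p-2)/2})$. $G_\epsilon(u)=\int_\Omega\psi_\epsilon(|u|^2)dx$ and $\Phi_\epsilon(u)=F(u)+\frac\alpha2\|u\|_V^2+\beta G_\epsilon(u)$. Algorithm A: choose a monotonically decreasing sequence $\epsilon_k\searrow0$, constants $\gamma>1$,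 $\tilde L>0$, and $u_0\in V$. Given $u_k$, for $L\ge0$ let problem (Q$_{k,L}$) be $\min_{u\in V} F(u_k)+F'(u_k)(u-u_k)+\frac L2\|u-u_k\|_V^2+\frac\alpha2\|u\|_V^2+\beta\int_\Omega\big[\psi_{\epsilon_k}(u_k^2)+\psi_{\epsilon_k}'(u_k^2)(u^2-u_k^2)\big]dx$ (strongly convex, unique minimizer), and let (D$_{k,L}$) be the condition $F(u_{k+1})\le F(u_k)+F'(u_k)(u_{k+1}-u_k)+L\|u_{k+1}-u_k\|_V^2$ for its minimizer $u_{k+1}$. $L_k$ is the smallest $L\in\{0\}\cup\{\tilde L\gamma^l:l\ge0\}$ for which (D$_{k,L}$) holds, and $u_{k+1}$ is the corresponding minimizer; then $k\mapsto k+1$. *)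

(* Defs.v *)
From HB Require Import structures.
From mathcomp Require Import all_boot all_order all_algebra.
From mathcomp Require Import all_classical all_reals all_analysis.
Set Implicit Arguments. Unset Strict Implicit. Unset Printing Implicit Defensive.
Import Order.TTheory GRing.Theory Num.Theory.
Import numFieldNormedType.Exports.
Local Open Scope classical_set_scope.
Local Open Scope ring_scope.

(* Geometry of the domain Omega in R^d, d = n.+1.                            *)
(* Points of R^d are d-tuples (this carries the product = Borel sigma-       *)
(* algebra of the library); for topology we view them as row vectors.       *)
Section Geometry.
Variables (R : realType) (n : nat).

Definition tvec (x : (n.+1).-tuple R) : 'rV[R]_(n.+1) := \row_i tnth x i.

Definition last_coord (z : 'rV[R]_(n.+1)) : R := z 0 ord_max.
Definition first_coords (z : 'rV[R]_(n.+1)) : 'rV[R]_n :=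
  \row_(j < n) z 0 (widen_ord (leqnSn n) j).

Definition orthogonal_mx (Q : 'M[R]_(n.+1)) : Prop := Q *m Q^T = 1%:M.

Definition lipschitz_boundary (O : set 'rV[R]_(n.+1)) : Prop :=
  forall x, closure O x -> ~ O x ->
    exists r : R, 0 < r /\
    exists Q : 'M[R]_(n.+1), orthogonal_mx Q /\
    exists gam : 'rV[R]_n -> R,
      (exists K : R, forall a b, `|gam a - gam b| <= K * `|a - b|) /\
      (forall y, ball x r y ->
        (O y <-> last_coord ((y - x) *m Q) < gam (first_coords ((y - x) *m Q)))).

Definition bounded_lipschitz_domain (Om : set ((n.+1).-tuple R)) : Prop :=
  let O := tvec @` Om in
  [/\ O !=set0, open O, connected O, bounded_set O & lipschitz_boundary O].

(* mu is Lebesgue measure on the (Borel) sets of R^d: it gives every box its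
   volume (this characterises it uniquely). *)
Definition is_lebesgue_measure (mu : set ((n.+1).-tuple R) -> \bar R) : Prop :=
  forall a b : (n.+1).-tuple R,
    mu [set x | forall i, tnth a i < tnth x i <= tnth b i] =
    (\prod_i Num.max (tnth b i - tnth a i) 0)%:E.

End Geometry.

Section Functional.
Variables (R : realType) (V : completeNormedModType R).

(* ip is an inner product inducing the norm of V (so V is a real Hilbert
   space, being complete) *)
Definition is_inner_product (ip : V -> V -> R) : Prop :=
  [/\ forall a u v w, ip (a *: u + v) w = a * ip u w + ip v w,
      forall u v, ip u v = ip v u &
      forall v, `|v| ^+ 2 = ip v v].

Definition is_dual (phi : V -> R) : Prop :=
  (forall a u v, phi (a *: u + v) = a * phi u + phi v) /\
  exists C : R, forall v, `|phi v| <= C * `|v|.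

Definition dual_dist_le (phi psi : V -> R) (e : R) : Prop :=
  forall v, `|phi v - psi v| <= e * `|v|.

Definition weak_cvg (u : nat -> V) (x : V) : Prop :=
  forall phi, is_dual phi -> (phi \o u) @ \oo --> phi x.

Definition standing_F (F : V -> R) (F' : V -> V -> R) : Prop :=
  [/\
      (forall (u : nat -> V) x, weak_cvg u x ->
         ((F x)%:E <= limn_einf (fun k => (F (u k))%:E))%E),
      (exists phi c, is_dual phi /\ forall v, phi v + c <= F v),
      (forall u, is_dual (F' u) /\
         forall e : R, 0 < e -> exists delta : R, 0 < delta /\
           forall h, `|h| < delta -> `|F (u + h) - F u - F' u h| <= e * `|h|) &
      (forall u (e : R), 0 < e -> exists delta : R, 0 < delta /\
         forall w, `|w - u| < delta -> dual_dist_le (F' w) (F' u) e)].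

Definition assumption_I_F (F' : V -> V -> R) : Prop :=
  (forall (u : nat -> V) x, weak_cvg u x ->
     forall e : R, 0 < e -> \forall k \near \oo, dual_dist_le (F' (u k)) (F' x) e) /\
  (forall r : R, exists C : R, forall u w, `|u| <= r -> `|w| <= r ->
     dual_dist_le (F' u) (F' w) (C * `|u - w|)).

End Functional.

Section Embedding.
Variables (R : realType) (n : nat).
Variable mu : {measure set ((n.+1).-tuple R) -> \bar R}.
Variable Om : set ((n.+1).-tuple R).

Definition sqnorm_L2 (f : (n.+1).-tuple R -> R) : \bar R :=
  (\int[mu]_(x in Om) ((f x) ^+ 2)%:E)%E.

Definition in_L2 (f : (n.+1).-tuple R -> R) : Prop :=
  measurable_fun Om f /\ (sqnorm_L2 f < +oo)%E.

Variable V : completeNormedModType R.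

(* iota v is a representative of the element v of V viewed in L^2(Omega) *)
Definition compact_dense_embedding (iota : V -> (n.+1).-tuple R -> R) : Prop :=
  [/\
      (forall v, in_L2 (iota v)),
      (forall a u v, {ae mu, forall x, Om x ->
          iota (a *: u + v) x = a * iota u x + iota v x}),
      (forall v, {ae mu, forall x, Om x -> iota v x = 0} -> v = 0),
      ((exists C : R, forall v, (sqnorm_L2 (iota v) <= (C * `|v| ^+ 2)%:E)%E) /\
       (forall u : nat -> V, (exists M : R, forall k, `|u k| <= M) ->
         exists (phi : nat -> nat) (f : (n.+1).-tuple R -> R),
           {homo phi : i j / (i < j)%N} /\ in_L2 f /\
           (fun k => sqnorm_L2 (fun x => iota (u (phi k)) x - f x)) @ \oo --> 0%E)) &
      (forall f, in_L2 f -> forall e : R, 0 < e ->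
         exists v, (sqnorm_L2 (fun x => (iota v x - f x)%R) < e%:E)%E)].

End Embedding.

Section Psi.
Variable R : realType.

Definition psi (p eps t : R) : R :=
  if t < eps ^+ 2 then p / 2 * t / (eps `^ (2 - p)) + (1 - p / 2) * eps `^ p
  else t `^ (p / 2).

(* psi' = p/2 * min(eps^(p-2), t^((p-2)/2)); for t < eps^2 the minimum is
   eps^(p-2) (with t^((p-2)/2) = +oo at t = 0) *)
Definition dpsi (p eps t : R) : R :=
  if t < eps ^+ 2 then p / 2 * eps `^ (p - 2) else p / 2 * t `^ ((p - 2) / 2).

End Psi.

Section Algorithm.
Variables (R : realType) (n : nat).
Variable mu : {measure set ((n.+1).-tuple R) -> \bar R}.
Variable Om : set ((n.+1).-tuple R).
Variables (V : completeNormedModType R) (iota : V -> (n.+1).-tuple R -> R).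
Variables (F : V -> R) (F' : V -> V -> R) (alpha beta p : R).

Definition G_eps (eps : R) (v : V) : R :=
  Rintegral mu Om (fun x => psi p eps (iota v x ^+ 2)).

Definition Phi_eps (eps : R) (v : V) : R :=
  F v + alpha / 2 * `|v| ^+ 2 + beta * G_eps eps v.

Definition Q_obj (epsk : R) (uk : V) (L : R) (w : V) : R :=
  F uk + F' uk (w - uk) + L / 2 * `|w - uk| ^+ 2 + alpha / 2 * `|w| ^+ 2
  + beta * Rintegral mu Om (fun x =>
      psi p epsk (iota uk x ^+ 2)
      + dpsi p epsk (iota uk x ^+ 2) * (iota w x ^+ 2 - iota uk x ^+ 2)).

Definition D_cond (uk : V) (L : R) (w : V) : Prop :=
  F w <= F uk + F' uk (w - uk) + L * `|w - uk| ^+ 2.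

Definition is_minimizer (f : V -> R) (w : V) : Prop := forall v, f w <= f v.

Definition L_candidate (gam Lt L : R) : Prop :=
  L = 0 \/ exists l : nat, L = Lt * gam ^+ l.

Definition algorithmA (eps : nat -> R) (gam Lt : R) (Lk : nat -> R) (u : nat -> V)
  : Prop :=
  forall k,
    [/\ L_candidate gam Lt (Lk k),
        is_minimizer (Q_obj (eps k) (u k) (Lk k)) (u k.+1),
        D_cond (u k) (Lk k) (u k.+1) &
        forall L, L_candidate gam Lt L -> L < Lk k ->
          forall w, is_minimizer (Q_obj (eps k) (u k) L) w -> ~ D_cond (u k) L w].

End Algorithm.

(* Main.v *)
Require Import Defs.
From HB Require Import structures.
From mathcomp Require Import all_boot all_order all_algebra.
From mathcomp Require Import all_classical all_reals all_analysis.
From mathcomp Require Import ring lra measurable_realfun.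
Import Order.TTheory GRing.Theory Num.Theory.
Import numFieldNormedType.Exports.
Local Open Scope classical_set_scope.
Local Open Scope ring_scope.
Section PsiFacts.
Context {R : realType}.
Implicit Types (q x y s t e : R).

Lemma young_pow q z : 0 <= z -> 0 < q < 1 -> z `^ q <= q * z + (1 - q).
Proof.
move=> z0 /andP[q0 q1].
have := @conjugate_powR R (z `^ q) 1 (q^-1) ((1 - q)^-1) (powR_ge0 _ _) ler01.
rewrite invr_gt0 q0 invr_gt0 subr_gt0 q1 !invrK => /(_ isT isT).
rewrite addrC subrK => /(_ erefl).
by rewrite mulr1 -powRrM mulfV ?gt_eqF// powRr1// powR1 mul1r mulrC.
Qed.
Definition Tq q x s := x `^ q + q * x `^ (q - 1) * (s - x).

Lemma tang q x y : 0 < q < 1 -> 0 < x -> 0 <= y -> y `^ q <= Tq q x y.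
Proof.
move=> qq x0 y0; have /andP[q0 q1] := qq.
have H := @young_pow _ _ (divr_ge0 y0 (ltW x0)) qq.
have xq : x `^ q = x * x `^ (q - 1) by rewrite mulr_powRB1 // ltW.
have Ey : y `^ q = (y / x) `^ q * x `^ q.
  by rewrite -powRM ?(divr_ge0 y0 (ltW x0)) ?(ltW x0) // divfK ?gt_eqF.
have xq0 : 0 <= x `^ q by apply: powR_ge0.
rewrite Ey; apply: le_trans (ler_wpM2r xq0 H) _.
rewrite /Tq xq; set A := x `^ (q - 1).
rewrite le_eqVlt; apply/orP; left; apply/eqP; field; exact: lt0r_neq0.
Qed.

Lemma tang_mono q x y s : 0 < q < 1 -> 0 < y -> y <= x -> s <= y ->
  Tq q y s <= Tq q x s.
Proof.
move=> qq y0 yx sy; have /andP[q0 q1] := qq.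
have x0 : 0 < x by apply: lt_le_trans yx.
have Ty := @tang _ _ y qq x0 (ltW y0).
have hxy : x `^ (q - 1) <= y `^ (q - 1).
  rewrite -(opprB 1 q) !powRN lef_pV2 ?posrE ?powR_gt0//.
  by apply: ge0_ler_powR; rewrite ?nnegrE; [lra|exact: ltW|exact: ltW|].
rewrite /Tq in Ty *.
have : q * y `^ (q - 1) * (s - y) <= q * x `^ (q - 1) * (s - y).
  rewrite -!mulrA; apply: ler_wpM2l; first exact: ltW.
  by rewrite ler_wnM2r //; lra.
nra.
Qed.
Lemma powR_sq e a : 0 < e -> (e ^+ 2) `^ a = e `^ (2 * a).
Proof. by move=> e0; rewrite -powR_mulrn ?ltW// -powRrM. Qed.

Lemma psiE p e t : 0 < e -> 0 <= t ->
  psi p e t = Tq (p / 2) (Num.max (e ^+ 2) t) t.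
Proof.
move=> e0 t0; rewrite /psi /Tq.
case: ltP => te.
  rewrite !powR_sq//.
  have -> : 2 * (p / 2) = p by field.
  have -> : 2 * (p / 2 - 1) = p - 2 by field.
  have -> : 2 - p = - (p - 2) by ring.
  have Ep : e `^ p = e `^ (p - 2) * e ^+ 2.
    by rewrite -powR_mulrn ?ltW// -powRD; [rewrite subrK | rewrite (gt_eqF e0) implybT].
  rewrite powRN Ep; set A := e `^ (p - 2).
  have A0 : A != 0 by rewrite gt_eqF// powR_gt0.
  by field.
by rewrite subrr mulr0 addr0.
Qed.

Lemma dpsiE p e t : 0 < e -> 0 <= t ->
  dpsi p e t = p / 2 * (Num.max (e ^+ 2) t) `^ (p / 2 - 1).
Proof.
move=> e0 t0; rewrite /dpsi.
case: ltP => te.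
  rewrite !powR_sq//.
  by have -> : 2 * (p / 2 - 1) = p - 2 by field.

by have -> : (p - 2) / 2 = p / 2 - 1 by field.
Qed.
Lemma powR_anti q x y : q < 1 -> 0 < y -> y <= x -> x `^ (q - 1) <= y `^ (q - 1).
Proof.
move=> q1 y0 yx; have x0 : 0 < x by apply: lt_le_trans yx.
rewrite -(opprB 1 q) !powRN lef_pV2 ?posrE ?powR_gt0//.
by apply: ge0_ler_powR; rewrite ?nnegrE; [lra|exact: ltW|exact: ltW|].
Qed.

Lemma TqD q x t s : Tq q x t + q * x `^ (q - 1) * (s - t) = Tq q x s.
Proof. rewrite /Tq; ring. Qed.

Lemma le_maxl (a b : R) : a <= Num.max a b.
Proof. by rewrite le_max lexx. Qed.
Lemma le_maxr (a b : R) : b <= Num.max a b.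
Proof. by rewrite le_max lexx orbT. Qed.

Lemma maxe_gt0 e t : 0 < e -> 0 < Num.max (e ^+ 2) t.
Proof. by move=> e0; apply: lt_le_trans (le_maxl _ _); rewrite exprn_gt0. Qed.

Lemma psi_concave p e s t : 0 < p < 1 -> 0 < e -> 0 <= s -> 0 <= t ->
  psi p e s <= psi p e t + dpsi p e t * (s - t).
Proof.
move=> /andP[p0 p1] e0 s0 t0.
have qq : 0 < p / 2 < 1 by apply/andP; split; lra.
rewrite psiE// psiE// dpsiE// TqD.
have Mt0 := maxe_gt0 _ t e0.
have [se|es] := ltP s (e ^+ 2).
  apply: tang_mono => //; first by rewrite exprn_gt0.
    exact: le_maxl.
  exact: ltW.
by rewrite {1}/Tq subrr mulr0 addr0; apply: tang.
Qed.

Lemma psi_mono p e e' s : 0 < p < 1 -> 0 < e' -> e' <= e -> 0 <= s ->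
  psi p e' s <= psi p e s.
Proof.
move=> /andP[p0 p1] e0 ee s0.
have qq : 0 < p / 2 < 1 by apply/andP; split; lra.
have e1 : 0 < e by apply: lt_le_trans ee.
rewrite psiE// psiE//; apply: tang_mono => //.
- exact: maxe_gt0.
- by apply: le_max2 => //; rewrite lerXn2r// ?nnegrE ltW.
- exact: le_maxr.
Qed.

Lemma psi_ge0 p e t : 0 < p < 1 -> 0 < e -> 0 <= t -> 0 <= psi p e t.
Proof.
move=> /andP[p0 p1] e0 t0.
have qq : 0 < p / 2 < 1 by apply/andP; split; lra.
by rewrite psiE//; apply: le_trans (powR_ge0 t (p / 2)) (@tang _ _ _ qq (maxe_gt0 _ t e0) t0).
Qed.

Lemma dpsi_ge0 p e t : 0 < p -> 0 < e -> 0 <= t -> 0 <= dpsi p e t.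
Proof.
move=> p0 e0 t0; rewrite dpsiE//; apply: mulr_ge0; last exact: powR_ge0.
by rewrite divr_ge0 ?ltW.
Qed.

Lemma dpsi_le0 p e t : 0 < p < 1 -> 0 < e -> 0 <= t -> dpsi p e t <= dpsi p e 0.
Proof.
move=> /andP[p0 p1] e0 t0; rewrite !dpsiE//.
apply: ler_wpM2l; first by rewrite divr_ge0 ?ltW.
apply: powR_anti; first lra.
  exact: maxe_gt0.
by apply: le_max2.
Qed.
End PsiFacts.
Lemma finite_Om (R : realType) (n : nat) (Om : set ((n.+1).-tuple R))
  (mu : {measure set ((n.+1).-tuple R) -> \bar R}) :
  bounded_lipschitz_domain Om -> measurable Om -> is_lebesgue_measure mu ->
  (mu Om < +oo)%E.
Proof.
case=> _ _ _ hb _ mOm hmu.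
have [M [_ HM]] := hb.
set K := `|M| + 1.
have HK : forall x, Om x -> forall i, `|tnth x i| <= K.
  move=> x Ox i; have := HM K (ltr_pwDr ltr01 (ler_norm M)) (tvec x) (ex_intro2 _ _ x Ox erefl).
  move=> /= Hx; apply: le_trans Hx.
  change (`|tnth x i| <= mx_norm (tvec x)); rewrite mx_normrE.
  have -> : tnth x i = tvec x (@ord0 0, i).1 (@ord0 0, i).2 by rewrite /tvec /= mxE.
  exact: le_bigmax.
pose a : (n.+1).-tuple R := [tuple (- K - 1) | i < n.+1].
pose b : (n.+1).-tuple R := [tuple (K + 1) | i < n.+1].
set box := [set x : (n.+1).-tuple R | forall i, tnth a i < tnth x i <= tnth b i].
have mbox : measurable box.
  have -> : box = \bigcap_(i in [set: 'I_n.+1])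
      ((fun x => tnth x i) @^-1` `]tnth a i, tnth b i]%classic).
    apply/seteqP; split => x /=.
      by move=> H i _ /=; rewrite in_itv /= H.
    by move=> H i; have := H i I; rewrite /= in_itv.
  apply: fin_bigcap_measurable; first exact: finite_finset.
  move=> i _; rewrite -[X in measurable X]setTI.
  by apply: measurable_tnth => //; exact: measurable_itv.
have sub : Om `<=` box.
  move=> x Ox i; rewrite !tnth_mktuple; have := HK x Ox i.
  rewrite ler_norml => /andP[h1 h2]; apply/andP; split; lra.
have hb2 : mu box = _ := hmu a b.
have hbox : (mu box < +oo)%E by rewrite hb2 ltry.
exact: le_lt_trans (le_measure _ (mem_set mOm) (mem_set mbox) sub) hbox.
Qed.
Section Integ.
Context {R : realType} {n : nat} {mu : {measure set ((n.+1).-tuple R) -> \bar R}}.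
Context {Om : set ((n.+1).-tuple R)}.
Hypotheses (mOm : measurable Om) (finOm : (mu Om < +oo)%E).

Lemma int_cst (k : R) : mu.-integrable Om (fun _ => k%:E).
Proof.
apply/integrableP; split; first exact: measurable_cst.
under eq_integral do rewrite abse_EFin.
by rewrite (integral_cst mu mOm (`|k|%:E)) lte_mul_pinfty// ?lee_fin //.
Qed.

Lemma int_sq f : in_L2 mu Om f -> mu.-integrable Om (fun x => (f x ^+ 2)%:E).
Proof.
case=> mf fi; apply/integrableP; split.
  by apply/measurable_EFinP; apply: measurable_funX.
move: fi; rewrite /sqnorm_L2.
move=> fi; rewrite (eq_integral (fun x => (f x ^+ 2)%:E)) // => x _.
by rewrite gee0_abs // lee_fin sqr_ge0.
Qed.

Lemma int_bound (g f1 f2 : (n.+1).-tuple R -> R) (K1 K2 : R) : measurable_fun Om g ->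
  in_L2 mu Om f1 -> in_L2 mu Om f2 ->
  (forall x, Om x -> `|g x| <= K1 + K2 * (f1 x ^+ 2 + f2 x ^+ 2)) ->
  mu.-integrable Om (EFin \o g).
Proof.
move=> mg h1 h2 hb.
have hi : mu.-integrable Om (fun x => K1%:E + (K2%:E * ((f1 x ^+ 2)%:E + (f2 x ^+ 2)%:E)))%E.
  apply: (integrableD mOm (int_cst K1)).
  by apply: (integrableZl mOm); apply: (integrableD mOm); apply: int_sq.
apply: (le_integrable mOm _ _ hi); first exact/measurable_EFinP.
move=> x Ox /=; rewrite lee_fin.
by apply: le_trans (hb x Ox) _; apply: ler_norm.
Qed.

Lemma ae_Rint (f g : (n.+1).-tuple R -> R) : measurable_fun Om f -> measurable_fun Om g ->
  {ae mu, forall x, Om x -> f x = g x} ->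
  Rintegral mu Om f = Rintegral mu Om g.
Proof.
move=> mf mg H; rewrite /Rintegral; congr fine.
apply: ae_eq_integral => //; try exact/measurable_EFinP.
by apply: filterS H => x H Ox; rewrite H.
Qed.
Lemma intZ (k : R) (f : (n.+1).-tuple R -> R) : mu.-integrable Om (EFin \o f) ->
  mu.-integrable Om (EFin \o (fun x => k * f x)).
Proof.
move=> H; apply: (eq_integrable mOm _ _ _ (integrableZl mOm k H)) => x _.
by rewrite /= EFinM.
Qed.

Lemma intD (f g : (n.+1).-tuple R -> R) : mu.-integrable Om (EFin \o f) ->
  mu.-integrable Om (EFin \o g) ->
  mu.-integrable Om (EFin \o (fun x => f x + g x)).
Proof.
move=> H1 H2; apply: (eq_integrable mOm _ _ _ (integrableD mOm H1 H2)) => x _.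
by rewrite /= EFinD.
Qed.
End Integ.
Lemma quad0 (R : realType) (c0 c1 c2 : R) :
  (forall t : R, c0 <= c0 + c1 * t + c2 * t ^+ 2) -> c1 = 0.
Proof.
move=> H; set K := `|c2| + 1.
have hK : 0 < K by rewrite /K ltr_pwDr.
have hK2 : c2 - K < 0 by rewrite /K subr_lt0 (le_lt_trans (ler_norm c2)) // ltrDl.
have := H (- c1 / K).
have E : c1 * (- c1 / K) + c2 * (- c1 / K) ^+ 2 = (c1 / K) ^+ 2 * (c2 - K).
  by field; rewrite gt_eqF.
rewrite -addrA E lerDl => h.
have y0 : 0 <= (c1 / K) ^+ 2 by apply: sqr_ge0.
have : (c1 / K) ^+ 2 <= 0 by nra.
move=> h2; have /eqP : (c1 / K) ^+ 2 = 0 by apply/le_anti/andP.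
rewrite expf_eq0 /= mulf_eq0 invr_eq0 (gt_eqF hK) orbF => /eqP //.
Qed.

Lemma dual0 (R : realType) (V : completeNormedModType R) (phi : V -> R) :
  is_dual phi -> phi 0 = 0.
Proof.
case=> hl _; have := hl 1 0 0; rewrite scale1r addr0 mul1r.
by move=> h; have := congr1 (fun z => z - phi 0) h; rewrite subrr addrK.
Qed.

Lemma dualZ (R : realType) (V : completeNormedModType R) (phi : V -> R) c v :
  is_dual phi -> phi (c *: v) = c * phi v.
Proof.
move=> hd; have := hd.1 c v 0; rewrite addr0 => ->.
by rewrite dual0 // addr0.
Qed.

Lemma measurable_psi (R : realType) (p e : R) : measurable_fun setT (psi p e).
Proof.
apply: measurable_fun_ifT.
- by apply: measurable_fun_ltr => //; exact: measurable_cst.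
- apply: measurable_funD; last exact: measurable_cst.
  apply: measurable_funM; last exact: measurable_cst.
  by apply: measurable_funM => //; exact: measurable_cst.
- exact: measurable_powR.
Qed.

Lemma measurable_dpsi (R : realType) (p e : R) : measurable_fun setT (dpsi p e).
Proof.
apply: measurable_fun_ifT.
- by apply: measurable_fun_ltr => //; exact: measurable_cst.
- exact: measurable_cst.
- apply: measurable_funM; first exact: measurable_cst.
  exact: measurable_powR.
Qed.

Theorem lemma7p3 (R : realType) (n : nat)
  (Om : set ((n.+1).-tuple R))
  (mu : {measure set ((n.+1).-tuple R) -> \bar R})
  (V : completeNormedModType R) (ip : V -> V -> R)
  (iota : V -> (n.+1).-tuple R -> R)
  (F : V -> R) (F' : V -> V -> R) (alpha beta p : R)
  (eps : nat -> R) (gam Lt : R) (Lk : nat -> R) (u : nat -> V) :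
  (* standing assumptions *)
  bounded_lipschitz_domain Om ->
  measurable Om ->
  is_lebesgue_measure mu ->
  is_inner_product ip ->
  compact_dense_embedding mu Om iota ->
  standing_F F F' ->
  0 < alpha -> 0 < beta -> 0 < p < 1 ->
  (* Assumption (I) *)
  assumption_I_F F' ->
  (* Algorithm A *)
  (forall k, 0 < eps k) ->
  (forall k, eps k.+1 <= eps k) ->
  eps @ \oo --> 0 ->
  1 < gam -> 0 < Lt ->
  algorithmA mu Om iota F F' alpha beta p eps gam Lt Lk u ->
  forall k,
    Phi_eps mu Om iota F alpha beta p (eps k.+1) (u k.+1)
    + alpha / 2 * `|u k.+1 - u k| ^+ 2
    + beta * Rintegral mu Om
        (fun x => dpsi p (eps k) (iota (u k) x ^+ 2) * (iota (u k.+1) x - iota (u k) x) ^+ 2)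
    <= Phi_eps mu Om iota F alpha beta p (eps k) (u k).
Proof.
move=> hdom mOm hmu hip hemb hF a0 b0 hp _ epos emono _ _ _ halg k.
have finOm := @finite_Om R n Om mu hdom mOm hmu.
case: hemb => hL2 hlin _ _ _.
case: hF => _ _ hder _.
have [hdual _] := hder (u k).
case: (halg k) => _ hmin hD _.
case: hip => ipl ips ipn.
set a := iota (u k); set b := iota (u k.+1).
set e := eps k; set e' := eps k.+1.
have e0 : 0 < e := epos k.
have e'0 : 0 < e' := epos k.+1.
have ee : e' <= e := emono k.
set d := fun x => dpsi p e (a x ^+ 2).
set h := (-1) *: u k.+1 + u k.
set L := Lk k.
set D0 := dpsi p e 0.
set psi0 := psi p e 0.
have La := hL2 (u k); have Lb := hL2 (u k.+1).
have ma : measurable_fun Om a := La.1.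
have mb : measurable_fun Om b := Lb.1.
have md : measurable_fun Om d.
  by apply: measurableT_comp; [exact: measurable_dpsi|exact: measurable_funX].
have dge0 : forall x, 0 <= d x by move=> x; apply: dpsi_ge0; rewrite ?sqr_ge0 //; case/andP: hp.
have dle : forall x, d x <= D0 by move=> x; apply: dpsi_le0; rewrite ?sqr_ge0.
have D00 : 0 <= D0 by rewrite /D0; apply: dpsi_ge0 => //; case/andP: hp.
have psiA : forall s, 0 <= s -> 0 <= psi p e s <= psi0 + D0 * s.
  move=> s s0; rewrite psi_ge0 //=.
  by have := psi_concave p e s 0 hp e0 s0 (lexx 0); rewrite subr0.
pose f0 := fun x => psi p e (a x ^+ 2) + d x * (b x ^+ 2 - a x ^+ 2).
pose f1 := fun x => 2 * (d x * (b x * (a x - b x))).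
pose f2 := fun x => d x * (a x - b x) ^+ 2.
have mpa : measurable_fun Om (fun x => psi p e (a x ^+ 2)).
  by apply: measurableT_comp; [exact: measurable_psi|exact: measurable_funX].
have mf0 : measurable_fun Om f0.
  apply: measurable_funD => //; apply: measurable_funM => //.
  by apply: measurable_funB; exact: measurable_funX.
have mf1 : measurable_fun Om f1.
  apply: measurable_funM; first exact: measurable_cst.
  apply: measurable_funM => //; apply: measurable_funM => //.
  exact: measurable_funB.
have mf2 : measurable_fun Om f2.
  apply: measurable_funM => //; apply: measurable_funX; exact: measurable_funB.
have i0 : mu.-integrable Om (EFin \o f0).
  apply: (int_bound mOm finOm _ _ _ psi0 (2 * D0) mf0 La Lb) => x Ox.
  have := psiA _ (sqr_ge0 (a x)); have := dge0 x; have := dle x.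
  rewrite /f0 -/(a x) -/(b x).
  have := sqr_ge0 (a x); have := sqr_ge0 (b x).
  set A := a x ^+ 2; set B := b x ^+ 2; set dd := d x; set P := psi p e A.
  move=> B0 A0 h1 h2 /andP[h3 h4].
  rewrite ler_norml; apply/andP; split; nra.
have i1 : mu.-integrable Om (EFin \o f1).
  apply: (int_bound mOm finOm _ _ _ 0 (4 * D0) mf1 La Lb) => x Ox.
  have := dge0 x; have := dle x.
  rewrite /f1 -/(a x) -/(b x).
  set A := a x; set B := b x; set dd := d x.
  move=> h1 h2.
  have hm : `|B * (A - B)| <= 2 * (A ^+ 2 + B ^+ 2).
    rewrite ler_norml; apply/andP; split; nra.
  rewrite normrM normrM (ger0_norm h2) ger0_norm // add0r.
  have := ler_wpM2l h2 hm; nra.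
have i2 : mu.-integrable Om (EFin \o f2).
  apply: (int_bound mOm finOm _ _ _ 0 (2 * D0) mf2 La Lb) => x Ox.
  have := dge0 x; have := dle x.
  rewrite /f2 -/(a x) -/(b x).
  set A := a x; set B := b x; set dd := d x.
  move=> h1 h2.
  rewrite normrM (ger0_norm h2) ger0_norm ?sqr_ge0 // add0r.
  have hm : (A - B) ^+ 2 <= 2 * (A ^+ 2 + B ^+ 2) by have := sqr_ge0 (A + B); nra.
  have hS : 0 <= 2 * (A ^+ 2 + B ^+ 2) by nra.
  have := ler_wpM2l h2 hm; have := ler_wpM2r hS h1; nra.
pose g' := fun x => psi p e' (b x ^+ 2).
have mg' : measurable_fun Om g'.
  by apply: measurableT_comp; [exact: measurable_psi|exact: measurable_funX].
have hg'f0 : forall x, g' x <= f0 x.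
  move=> x; rewrite /g' /f0; apply: le_trans (psi_mono p e e' _ hp e'0 ee (sqr_ge0 _)) _.
  by apply: psi_concave; rewrite ?sqr_ge0.
have ig' : mu.-integrable Om (EFin \o g').
  apply: (int_bound mOm finOm _ _ _ psi0 D0 mg' La Lb) => x Ox.
  have h0 : 0 <= g' x by apply: psi_ge0 => //; exact: sqr_ge0.
  have := psiA _ (sqr_ge0 (b x)) => /andP[_ h3].
  have h4 : g' x <= psi p e (b x ^+ 2) by apply: psi_mono; rewrite ?sqr_ge0.
  rewrite ger0_norm // -/(a x) -/(b x); have := mulr_ge0 D00 (sqr_ge0 (a x)); nra.
have hiota : forall t, {ae mu, forall x, Om x ->
    iota (t *: h + u k.+1) x = b x + t * (a x - b x)}.
  move=> t; have H1 := hlin t h (u k.+1); have H2 := hlin (-1) (u k.+1) (u k).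
  apply: (filterS2 _ _ H1 H2) => x G1 G2 Ox.
  by rewrite G1 // G2 // -/a -/b; ring.
set Fh := F' (u k) h.
set N := `|h| ^+ 2.
set Ib := ip h (u k.+1).
set Nb := `|u k.+1| ^+ 2.
set P0 := Rintegral mu Om f0.
set P1 := Rintegral mu Om f1.
set P2 := Rintegral mu Om f2.
have hv : forall t, t *: h + u k.+1 - u k = (t - 1) *: h.
  move=> t; rewrite scalerBl scale1r -addrA; congr (_ + _).
  by rewrite /h scaleN1r opprD opprK addrC.
have hQt : forall t, Q_obj mu Om iota F F' alpha beta p e (u k) L (t *: h + u k.+1)
   = F (u k) + (t - 1) * Fh + L / 2 * ((t - 1) ^+ 2 * N)
     + alpha / 2 * (t ^+ 2 * N + 2 * t * Ib + Nb) + beta * (P0 + t * P1 + t ^+ 2 * P2).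
  move=> t; rewrite /Q_obj hv (@dualZ R V (F' (u k)) (t - 1) h hdual) normrZ exprMn real_normK ?num_real //.
  have hn : `|t *: h + u k.+1| ^+ 2 = t ^+ 2 * N + 2 * t * Ib + Nb.
    have e1 : ip h (t *: h + u k.+1) = t * ip h h + ip h (u k.+1).
      by rewrite ips ipl (ips (u k.+1)).
    have e2 : ip (u k.+1) (t *: h + u k.+1) = t * ip h (u k.+1) + ip (u k.+1) (u k.+1).
      by rewrite ips ipl.
    rewrite ipn ipl e1 e2 /N /Nb /Ib !ipn; ring.
  have hI : Rintegral mu Om (fun x => psi p e (iota (u k) x ^+ 2) +
      dpsi p e (iota (u k) x ^+ 2) * (iota (t *: h + u k.+1) x ^+ 2 - iota (u k) x ^+ 2))
      = P0 + t * P1 + t ^+ 2 * P2.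
    rewrite (ae_Rint mOm _ (fun x => f0 x + (t * f1 x + t ^+ 2 * f2 x))).
    - rewrite (RintegralD (f1 := f0) (f2 := fun x => t * f1 x + t ^+ 2 * f2 x)) //;
        last by apply: (intD mOm); apply: (intZ mOm).
      rewrite (RintegralD (f1 := fun x => t * f1 x) (f2 := fun x => t ^+ 2 * f2 x)) //;
        try by apply: (intZ mOm).
      by rewrite (RintegralZl (f := f1)) // (RintegralZl (f := f2)) // addrA.
    - apply: measurable_funD => //; apply: measurable_funM => //.
      by apply: measurable_funB; apply: measurable_funX => //; case: (hL2 (t *: h + u k.+1)).
    - apply: measurable_funD => //; apply: measurable_funD; apply: measurable_funM => //;
        exact: measurable_cst.
    - apply: filterS (hiota t) => x H Ox; rewrite H // -/a -/b /f0 /f1 /f2 -/(d x); ring.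
  by rewrite hn hI.
set c0 := F (u k) - Fh + L / 2 * N + alpha / 2 * Nb + beta * P0.
set c1 := Fh - L * N + alpha * Ib + beta * P1.
set c2 := (L / 2 + alpha / 2) * N + beta * P2.
have hc1 : c1 = 0.
  apply: (@quad0 R c0 c1 c2) => t.
  have := hmin (t *: h + u k.+1).
  have E0 : u k.+1 = 0 *: h + u k.+1 by rewrite scale0r add0r.
  rewrite {1}E0 !hQt.
  have -> : F (u k) + (0 - 1) * Fh + L / 2 * ((0 - 1) ^+ 2 * N) +
     alpha / 2 * (0 ^+ 2 * N + 2 * 0 * Ib + Nb) + beta * (P0 + 0 * P1 + 0 ^+ 2 * P2) = c0.
    by rewrite /c0; ring.
  have -> : F (u k) + (t - 1) * Fh + L / 2 * ((t - 1) ^+ 2 * N) +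
     alpha / 2 * (t ^+ 2 * N + 2 * t * Ib + Nb) + beta * (P0 + t * P1 + t ^+ 2 * P2)
     = c0 + c1 * t + c2 * t ^+ 2.
    by rewrite /c0 /c1 /c2; field.
  by [].
have hQ1 := hQt 1.
have E1 : 1 *: h + u k.+1 = u k.
  by rewrite scale1r /h scaleN1r addrAC addNr add0r.
rewrite E1 in hQ1.
have hQk : Q_obj mu Om iota F F' alpha beta p e (u k) L (u k) =
    Phi_eps mu Om iota F alpha beta p e (u k).
  rewrite /Q_obj /Phi_eps /G_eps subrr (@dual0 R V (F' (u k)) hdual) normr0.
  rewrite expr0n /= mulr0 !addr0.
  congr (_ + _ * _); apply: eq_Rintegral => x _; rewrite subrr mulr0 addr0 //.
have hDk := hD.
rewrite /D_cond in hDk.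
have hv0 := hv 0; rewrite scale0r add0r in hv0.
rewrite hv0 (@dualZ R V (F' (u k)) (0 - 1) h hdual) normrZ exprMn real_normK ?num_real // in hDk.
have hG : G_eps mu Om iota p e' (u k.+1) <= P0.
  by apply: (le_Rintegral mOm ig' i0) => x _; apply: hg'f0.
have hR2 : Rintegral mu Om
    (fun x => dpsi p e (iota (u k) x ^+ 2) * (iota (u k.+1) x - iota (u k) x) ^+ 2) = P2.
  by apply: eq_Rintegral => x _; rewrite /f2 /d -/a -/b; ring.
rewrite hR2 -hQk hQ1 hv0 normrZ exprMn real_normK ?num_real //.
rewrite /Phi_eps.
have hbG := ler_wpM2l (ltW b0) hG.
rewrite -/Nb -/N.
have : c0 + c1 * 1 + c2 * 1 ^+ 2 = F (u k) + (1 - 1) * Fh + L / 2 * ((1 - 1) ^+ 2 * N) +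
     alpha / 2 * (1 ^+ 2 * N + 2 * 1 * Ib + Nb) + beta * (P0 + 1 * P1 + 1 ^+ 2 * P2).
  by rewrite /c0 /c1 /c2; field.
rewrite hc1 /c0 /c2 => <-.
rewrite -/Fh -/N in hDk.
rewrite -/L in hDk. nra.
Qed.
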